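(* Let $d\in\mathbb{N}$, let $\mathcal{L}:\mathbb{R}^d\to\mathbb{R}$ be differentiable and $L$-smooth (i.e. $\nabla\mathcal{L}$ is $L$-Lipschitz with respect to the Euclidean norm, for some $L\ge 0$), and let $\tau>0$. Let $(\lambda^{(k)})_{k\ge 0}$ be any sequence of parameters with $\lambda^{(k)}\ge 0$. Starting from arbitrary $p^{(0)},\theta^{(0)}\in\mathbb{R}^d$, define for $k\ge 0$ $$p^{(k+1)} = p^{(k)} - \tau\,\nabla\mathcal{L}(\theta^{(k)}),\qquad \theta^{(k+1)} = \nabla \operatorname{EN}_{\lambda^{(k)}}^*\big(p^{(k+1)}\big),$$ where $\operatorname{EN}_\lambda(\theta)=\tfrac12|\theta|_2^2+\lambda|\theta|_1$ and $\nabla\operatorname{EN}_\lambda^*(p) = \big(\operatorname{sign}(p_i)\max\{|p_i|-\lambda,0\}\big)_{i=1}^d$ is the gradient of its convex conjugate (componentwise soft-thresholding). Then for every $k\ge 1$, $$\mathcal{L}(\theta^{(k+1)}) + \Big(\frac{1}{\tau}-\frac{L}{2}\Big)\,|\theta^{(k+1)}-\theta^{(k)}|_2^2 + \frac{\lambda^{(k)}-\lambda^{(k-1)}}{\tau}\big(|\theta^{(k+1)}|_1 - |\theta^{(k)}|_1\big) \le \mathcal{L}(\theta^{(k)}).$$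
   Context: $|\cdot|_1$ and $|\cdot|_2$ denote the $\ell_1$ and Euclidean norms on $\mathbb{R}^d$. The iteration is a linearized Bregman / lazy mirror descent scheme with an elastic-net mirror functional whose $\ell_1$-weight $\lambda^{(k)}$ may change from iteration to iteration. *)

(* Defs.v *)
From HB Require Import structures.
From mathcomp Require Import all_boot all_order all_algebra.
From mathcomp Require Import all_classical all_reals all_analysis.
Set Implicit Arguments. Unset Strict Implicit. Unset Printing Implicit Defensive.
Import Order.TTheory GRing.Theory Num.Theory.
Import numFieldNormedType.Exports.
Local Open Scope ring_scope.

Definition sqnorm2 {R : realType} {d : nat} (x : 'rV[R]_d) : R :=
  \sum_(i < d) x 0 i ^+ 2.

Definition norm2 {R : realType} {d : nat} (x : 'rV[R]_d) : R :=
  Num.sqrt (sqnorm2 x).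

Definition norm1 {R : realType} {d : nat} (x : 'rV[R]_d) : R :=
  \sum_(i < d) `|x 0 i|.

Definition grad {R : realType} {d : nat} (f : 'rV[R]_d -> R) (x : 'rV[R]_d)
  : 'rV[R]_d := \row_(i < d) ('D_(delta_mx 0 i) f x).

(* gradient of the conjugate of EN_lambda: componentwise soft-thresholding *)
Definition soft_thresh {R : realType} {d : nat} (lam : R) (p : 'rV[R]_d)
  : 'rV[R]_d := \row_(i < d) (Num.sg (p 0 i) * Num.max (`|p 0 i| - lam) 0).

Definition L_smooth {R : realType} {d : nat} (f : 'rV[R]_d -> R) (L : R) :=
  forall x y : 'rV[R]_d, norm2 (grad f x - grad f y) <= L * norm2 (x - y).

Fixpoint lbi_iter {R : realType} {d : nat} (f : 'rV[R]_d -> R) (tau : R)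
  (lam : nat -> R) (p0 th0 : 'rV[R]_d) (k : nat) : 'rV[R]_d * 'rV[R]_d :=
  match k with
  | 0%N => (p0, th0)
  | k'.+1 =>
      let pt := lbi_iter f tau lam p0 th0 k' in
      let p' := pt.1 - tau *: grad f pt.2 in
      (p', soft_thresh (lam k') p')
  end.

(* Main.v *)
Require Import Defs.
From HB Require Import structures.
From mathcomp Require Import all_boot all_order all_algebra.
From mathcomp Require Import all_classical all_reals all_analysis.
From mathcomp Require Import ring lra.
Import Order.TTheory GRing.Theory Num.Theory.
Import numFieldNormedType.Exports.
Local Open Scope ring_scope.

Section S.
Context {R : realType} {d : nat}.
Implicit Types u v x h : 'rV[R]_d.

Definition ip u v : R := \sum_(i < d) u 0 i * v 0 i.

Lemma sqnorm2_ge0 u : 0 <= sqnorm2 u.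
Proof. by apply: sumr_ge0 => i _; rewrite sqr_ge0. Qed.

Lemma sqnorm2_eq0 u : sqnorm2 u = 0 -> forall i, u 0 i = 0.
Proof.
move=> /eqP; rewrite /sqnorm2 psumr_eq0 => [/allP H i|i _]; last by rewrite sqr_ge0.
by have := H i (mem_index_enum i); rewrite /= sqrf_eq0 => /eqP.
Qed.

Lemma CS u v : ip u v <= norm2 u * norm2 v.
Proof.
set a := norm2 u; set b := norm2 v.
have a0 : 0 <= a by exact: sqrtr_ge0.
have b0 : 0 <= b by exact: sqrtr_ge0.
have Ha : a ^+ 2 = sqnorm2 u by rewrite sqr_sqrtr // sqnorm2_ge0.
have Hb : b ^+ 2 = sqnorm2 v by rewrite sqr_sqrtr // sqnorm2_ge0.
have key : 0 <= b ^+ 2 * sqnorm2 u - 2 * a * b * ip u v + a ^+ 2 * sqnorm2 v.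
  have -> : b ^+ 2 * sqnorm2 u - 2 * a * b * ip u v + a ^+ 2 * sqnorm2 v
     = \sum_(i < d) (b * u 0 i - a * v 0 i) ^+ 2.
    rewrite /sqnorm2 /ip !mulr_sumr -sumrN -!big_split /=.
    by apply: eq_bigr => i _; ring.
  by apply: sumr_ge0 => i _; rewrite sqr_ge0.
have [a0'|] := eqVneq a 0.
  have u0 : forall i, u 0 i = 0 by apply: sqnorm2_eq0; rewrite -Ha a0' expr0n.
  rewrite /ip big1 ?a0' ?mul0r // => i _; by rewrite u0 mul0r.
have [b0'|] := eqVneq b 0.
  have v0 : forall i, v 0 i = 0 by apply: sqnorm2_eq0; rewrite -Hb b0' expr0n.
  rewrite /ip big1 ?b0' ?mulr0 // => i _; by rewrite v0 mulr0.
move=> bn an.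
have ab : 0 < a * b by rewrite mulr_gt0 // lt0r ?an ?bn.
rewrite -Ha -Hb in key.
have : 0 <= (a * b) * (a * b - ip u v) by nra.
by rewrite pmulr_rge0 // subr_ge0.
Qed.

End S.
Section S.
Context {R : realType} {d : nat} (f : 'rV[R]_d -> R).
Hypothesis df : forall x : 'rV[R]_d, differentiable f x.

Lemma Dgrad y h : 'D_h f y = ip (grad f y) h.
Proof.
rewrite deriveE // {1}(row_sum_delta h) linear_sum /ip.
apply: eq_bigr => i _; rewrite linearZ /= -deriveE // mxE mulrC.
by [].
Qed.

Lemma gderiv (x h : 'rV[R]_d) (t : R) : is_derive t (1:R) (fun s : R => f (x + s *: h)) ('D_h f (x + t *: h)).
Proof.
set g := (fun s : R => f (x + s *: h)).
have E : (fun s : R => s^-1 *: ((g \o shift t) (s *: 1) - g t)) =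
   (fun s => s^-1 *: ((f \o shift (x + t *: h)) (s *: h) - f (x + t *: h))).
  apply: funext => s; rewrite /g /= /shift; congr (_ *: (f _ - _)).
  by rewrite scalerDl [s%:A]mulr1 addrCA.
constructor; first by rewrite /derivable E; exact: diff_derivable.
by rewrite /derive E.
Qed.

Lemma norm2Z (t : R) (h : 'rV[R]_d) : norm2 (t *: h) = `|t| * norm2 h.
Proof.
rewrite /norm2 -sqrtr_sqr -sqrtrM ?sqr_ge0 //; congr Num.sqrt.
rewrite /sqnorm2 mulr_sumr; apply: eq_bigr => i _; by rewrite mxE exprMn.
Qed.

Lemma ipBl (u v h : 'rV[R]_d) : ip (u - v) h = ip u h - ip v h.
Proof.
rewrite /ip -sumrB; apply: eq_bigr => i _; by rewrite !mxE mulrBl.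
Qed.

Lemma descent (L : R) : 0 <= L -> L_smooth f L -> forall x h : 'rV[R]_d,
  f (x + h) <= f x + ip (grad f x) h + L / 2 * sqnorm2 h.
Proof.
move=> L0 Ls x h.
set c1 := ip (grad f x) h; set S := sqnorm2 h; set k := L / 2 * S.
pose g := (fun s : R => f (x + s *: h)).
pose phi := g - c1 \*: (@id R) - k \*: ((@id R) * (@id R)).
have dphi : forall t, is_derive t (1:R) phi
   ('D_h f (x + t *: h) - c1 *: (1:R) - k *: (t *: (1:R) + t *: (1:R))).
  move=> t.
  have h1 := gderiv x h t.
  have h2 : is_derive t (1:R) (@id R) 1 := is_derive_id _ _.
  have h3 := is_deriveM h2 h2.
  have h4 := is_deriveZ c1 h2.
  have h5 := is_deriveZ k h3.
  exact: (is_deriveB (is_deriveB h1 h4) h5).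
have key : phi 1 <= phi 0.
  apply: (@ler0_derive1_nincr _ phi 0 1) => //; last first.
  - apply: derivable_within_continuous => t _; exact: ex_derive.
  - move=> t; rewrite in_itv /= => /andP[t0 t1].
    rewrite derive1E derive_val Dgrad.
    have w := CS (grad f (x + t *: h) - grad f x) h.
    have := Ls (x + t *: h) x.
    rewrite addrAC subrr add0r norm2Z (ger0_norm (ltW t0)) => Lip.
    have n0 : 0 <= norm2 h by exact: sqrtr_ge0.
    have nS : norm2 h ^+ 2 = S by rewrite sqr_sqrtr // sqnorm2_ge0.
    have : ip (grad f (x + t *: h) - grad f x) h <= L * t * S.
      apply: (le_trans w); rewrite -nS expr2 mulrA ler_wpM2r //.
      by rewrite -mulrA.
    rewrite ipBl -/c1 => H.
    rewrite /k /GRing.scale /= !mulr1.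
    lra.
have E : forall t : R, phi t = f (x + t *: h) - c1 * t - k * (t * t) by [].
move: key; rewrite !E scale0r scale1r addr0 !mulr0 !mulr1 subr0.
lra.
Qed.
End S.

Lemma soft_ineq {R : realDomainType} (lam q c : R) : 0 <= lam ->
  lam * (`|Num.sg q * Num.max (`|q| - lam) 0| - `|c|) <=
  (q - Num.sg q * Num.max (`|q| - lam) 0) * (Num.sg q * Num.max (`|q| - lam) 0 - c).
Proof.
move=> l0.
have c1 := ler_norm c.
have c2 := ler_norm (- c); rewrite normrN in c2.
have c3 := normr_ge0 c.
rewrite maxElt; case: (ltrgtP q 0) => [qn|qp|->].
- rewrite (ltr0_sg qn) (ltr0_norm qn).
  case: ifP => H.
  + rewrite mulr0 normr0; nra.
  + move/negbT: H; rewrite -leNgt => H.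
    rewrite ler0_norm; last by nra.
    nra.
- rewrite (gtr0_sg qp) (gtr0_norm qp).
  case: ifP => H.
  + rewrite mulr0 normr0; nra.
  + move/negbT: H; rewrite -leNgt => H.
    rewrite ger0_norm; last by nra.
    nra.
- rewrite sgr0 !mul0r normr0; nra.
Qed.
Theorem lemma1 (R : realType) (d : nat) (f : 'rV[R]_d -> R) (L tau : R)
  (lam : nat -> R) (p0 th0 : 'rV[R]_d) :
  (forall x : 'rV[R]_d, differentiable f x) ->
  0 <= L -> L_smooth f L -> 0 < tau ->
  (forall k, 0 <= lam k) ->
  forall k : nat, (1 <= k)%N ->
    let th := fun n => (lbi_iter f tau lam p0 th0 n).2 in
    f (th k.+1) + (tau^-1 - L / 2) * sqnorm2 (th k.+1 - th k)
      + (lam k - lam k.-1) / tau * (norm1 (th k.+1) - norm1 (th k))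
    <= f (th k).
Proof.
move=> dfx L0 Ls tau0 lam0 [//|k'] _; cbv zeta beta; rewrite [k'.+1.-1]/=.
set P := (lbi_iter f tau lam p0 th0 k'.+1).1.
set b := (lbi_iter f tau lam p0 th0 k'.+1).2.
set a := (lbi_iter f tau lam p0 th0 k'.+2).2.
have E1 : b = soft_thresh (lam k') P by [].
have E2 : a = soft_thresh (lam k'.+1) (P - tau *: grad f b) by [].
set g := grad f b in E2.
have desc := @descent R d f dfx L L0 Ls b (a - b).
rewrite addrC subrK -/g in desc.
clearbody a b P g.
have key : (lam k'.+1 - lam k') * (norm1 a - norm1 b)
           <= - tau * ip g (a - b) - sqnorm2 (a - b).
  rewrite /norm1 /ip /sqnorm2 -sumrB mulr_sumr mulr_sumr -sumrB.
  apply: ler_sum => i _.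
  have h1 := soft_ineq (lam k'.+1) ((P - tau *: g) 0 i) (b 0 i) (lam0 k'.+1).
  have h2 := soft_ineq (lam k') (P 0 i) (a 0 i) (lam0 k').
  have ea : a 0 i = Num.sg ((P - tau *: g) 0 i) * Num.max (`|(P - tau *: g) 0 i| - lam k'.+1) 0.
    by rewrite E2 mxE.
  have eb : b 0 i = Num.sg (P 0 i) * Num.max (`|P 0 i| - lam k') 0.
    by rewrite E1 mxE.
  rewrite -ea in h1; rewrite -eb in h2.
  have eq : (P - tau *: g) 0 i = P 0 i - tau * g 0 i by rewrite !mxE.
  rewrite eq in h1.
  rewrite !mxE.
  nra.
set S := sqnorm2 (a - b) in desc key *.
set I := ip g (a - b) in desc key.
set X := (lam k'.+1 - lam k') * (norm1 a - norm1 b) in key.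
have ti : 0 < tau^-1 by rewrite invr_gt0.
have tt : tau * tau^-1 = 1 by rewrite mulfV // gt_eqF.
have H := ler_wpM2l (ltW ti) key.
have -> : (lam k'.+1 - lam k') / tau * (norm1 a - norm1 b) = tau^-1 * X by rewrite /X; ring.
have E : tau^-1 * (- tau * I - S) = - I - tau^-1 * S.
  rewrite mulrBr; congr (_ - _); rewrite mulNr mulrN; congr (- _); by rewrite mulrA [tau^-1 * tau]mulrC tt mul1r.
rewrite E in H.
nra.
Qed.
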